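(* Let $C'$ be an odd-like binary Euclidean LCD $[n,k,d]$ code with $k\ge 1$. Then there exist a binary Euclidean LCD $[n,k-1,d']$ code $C$ with $d'\ge d$ (when $k\ge 2$), a generator matrix $G$ of $C$, and a vector $\mathbf{y}\in C^{\perp_E}$ of odd Hamming weight, such that $C'$ is equivalent to the binary code with generator matrix $\begin{pmatrix}\mathbf{y}\\ G\end{pmatrix}$.
   Context: A binary $[n,k,d]$ code is a $k$-dimensional subspace of $\mathbb{F}_2^n$ with minimum nonzero Hamming weight $d$. $C^{\perp_E}$ is the dual with respect to $\langle x,y\rangle_E=\sum x_iy_i$; $C$ is LCD if $C\cap C^{\perp_E}=\{0\}$. A binary code is odd-like if it contains a codeword $x$ with $\sum x_i=1$. Two codes are equivalent if one is obtained from the other by a coordinate permutation (monomial transformation). *)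

(* Defs.v *)
From mathcomp Require Import all_boot all_order all_fingroup all_algebra.
Set Implicit Arguments. Unset Strict Implicit. Unset Printing Implicit Defensive.
Import GRing.Theory.
Local Open Scope ring_scope.

Notation F2 := 'F_2.

Definition wt n (v : 'rV[F2]_n) : nat := #|[set i : 'I_n | v 0 i != 0]|.

(* A code of length n is the row space of a matrix C (mxalgebra style);
   its dimension is \rank C; v is a codeword iff (v <= C)%MS. *)

Definition edual m n (C : 'M[F2]_(m, n)) : 'M[F2]_n := kermx C^T.

Definition is_LCD m n (C : 'M[F2]_(m, n)) : Prop := ((C :&: edual C)%MS <= (0 : 'rV[F2]_n))%MS.

Definition min_dist m n (C : 'M[F2]_(m, n)) (d : nat) : Prop :=
  (exists2 v : 'rV[F2]_n, (v <= C)%MS & (v != 0) /\ wt v = d) /\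
  (forall v : 'rV[F2]_n, (v <= C)%MS -> v != 0 -> (d <= wt v)%N).

Definition odd_like m n (C : 'M[F2]_(m, n)) : Prop :=
  exists2 x : 'rV[F2]_n, (x <= C)%MS & \sum_(i < n) x 0 i = 1.

Definition generator_matrix k m n (G : 'M[F2]_(k, n)) (C : 'M[F2]_(m, n)) : Prop :=
  row_free G /\ (G == C)%MS.

Definition code_equiv m1 m2 n (C1 : 'M[F2]_(m1, n)) (C2 : 'M[F2]_(m2, n)) : Prop :=
  exists s : 'S_n, (col_perm s C1 == C2)%MS.

(* Main.v *)
Require Import Defs.
From mathcomp Require Import all_boot all_order all_fingroup all_algebra.
Import GRing.Theory.
Local Open Scope ring_scope.
Lemma F2all (P : 'F_2 -> Prop) : P 0 -> P 1 -> forall x, P x.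
Proof. move=> P0 P1 x. 
case: x => [[|[|//]] Hx].
- by have -> : Ordinal Hx = 0 by apply: val_inj.
- by have -> : Ordinal Hx = 1 by apply: val_inj.
Qed.
Lemma F2sq (x : 'F_2) : x * x = x.
Proof. by move: x; apply: F2all; rewrite ?mul0r ?mul1r. Qed.
Lemma F2b (x : 'F_2) : x = (x != 0)%:R.
Proof. by move: x; apply: F2all; rewrite ?eqxx ?oner_eq0. Qed.
Lemma F2nat (m : nat) : (m%:R : 'F_2) = (odd m)%:R.
Proof. elim: m => // m IH; rewrite -[m.+1]addn1 natrD IH /=; rewrite addn1 /=; case: (odd m) => /=; [by apply: val_inj | by rewrite add0r]. Qed.

Lemma gen_of_rank n m (C : 'M['F_2]_n) : \rank C = m ->
  exists G : 'M['F_2]_(m, n), row_free G /\ (G == C)%MS.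
Proof. move=> <-; exists (row_base C); split; [exact: row_base_free | apply/eqmxP; exact: eq_row_base]. Qed.

Theorem theorem3p11 (n k d : nat) (C' : 'M['F_2]_n) :
  (1 <= k)%N -> \rank C' = k -> is_LCD C' -> min_dist C' d -> odd_like C' ->
  exists (C : 'M['F_2]_n) (G : 'M['F_2]_(k.-1, n)) (y : 'rV['F_2]_n),
    [/\ \rank C = k.-1, is_LCD C,
        ((1 < k)%N -> exists2 d' : nat, min_dist C d' & (d <= d')%N),
        generator_matrix G C &
        [/\ (y <= edual C)%MS, odd (wt y) & code_equiv C' (col_mx y G)]].
Proof.
move=> hk hrk hlcd [_ hdmin] [y hyC hsum].
have yy : y *m y^T = 1%:M.
  rewrite [y *m y^T]mx11_scalar; congr (_%:M); rewrite !mxE -[RHS]hsum.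
  by apply: eq_bigr => i _; rewrite mxE F2sq.
have hodd : odd (wt y).
  have : \sum_(i | y 0 i != 0) (1 : 'F_2) = (wt y)%:R.
    by rewrite /wt -sumr_const; apply: eq_bigl => i; rewrite inE.
  rewrite F2nat big_mkcond /=.
  have -> : \sum_i (if y 0 i != 0 then (1 : 'F_2) else 0) = 1.
    rewrite -[RHS]hsum; apply: eq_bigr => i _.
    by rewrite [RHS]F2b; case: (y 0 i != 0).
  by case: (odd (wt y)) => // /eqP; rewrite eq_sym oner_eq0.
have y0 : y != 0.
  apply/eqP => y0; move: hsum; rewrite y0 big1 => [|i _]; last by rewrite mxE.
  by move/eqP; rewrite eq_sym oner_eq0.
set C := (C' :&: kermx y^T)%MS.
have hCC' : (C <= C')%MS := capmxSl _ _.
have hCy : C *m y^T = 0 by apply/sub_kermxP; exact: capmxSr.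
have hdec : (C' <= y + C)%MS.
  rewrite -[C'](subrK ((C' *m y^T) *m y)) addrC.
  apply: addmx_sub_adds; first exact: submxMl.
  rewrite sub_capmx; apply/andP; split.
    apply: addmx_sub => //; rewrite eqmx_opp; exact: submx_trans (submxMl _ _) hyC.
  by apply/sub_kermxP; rewrite mulmxBl -[C' *m y^T *m y *m y^T]mulmxA yy mulmx1 subrr.
have hsup : (y + C <= C')%MS by rewrite addsmx_sub hyC hCC'.
have hdisj : (y :&: C)%MS = 0.
  apply/eqP; rewrite -submx0; apply/rV_subP => v.
  rewrite sub_capmx => /andP [/sub_rVP [a ->] hv].
  have : (a *: y) *m y^T = 0 by apply/sub_kermxP; exact: submx_trans hv (capmxSr _ _).
  rewrite -scalemxAl yy => /matrixP /(_ 0 0); rewrite !mxE /= mulr1 => ->.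
  by rewrite scale0r sub0mx.
have hrC : \rank C = k.-1.
  have := mxrank_disjoint_sum hdisj; rewrite -(eqmx_rank (A := C')) ?hdec // rank_rV y0 hrk.
  by move=> ->.
have [G [hGf hGC]] := gen_of_rank _ _ _ hrC.
exists C, G, y; split => //.
- rewrite /is_LCD; apply: submx_trans hlcd; rewrite sub_capmx.
  apply/andP; split; first exact: submx_trans (capmxSl _ _) hCC'.
  apply/sub_kermxP.
  have hv1 : (C :&: edual C)%MS *m C^T = 0 by apply/sub_kermxP; exact: capmxSr.
  have hv2 : (C :&: edual C)%MS *m y^T = 0.
    by apply/sub_kermxP; apply: submx_trans (capmxSl _ _) (capmxSr _ _).
  move: hdec; rewrite addsmxE => /submxP [D ->].
  by rewrite trmx_mul mulmxA tr_col_mx mul_mx_row hv1 hv2 row_mx0 mul0mx.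
- move=> hk2.
  have hC0 : C != 0 by rewrite -mxrank_eq0 hrC -lt0n -ltnS prednK.
  have [i hi] : exists i, row i C != 0.
    apply/existsP; apply: contraR hC0 => /existsPn hr; apply/eqP/row_matrixP => i.
    by rewrite row0; apply/eqP; rewrite -[_ == _]negbK hr.
  pose P m := [exists v : 'rV['F_2]_n, [&& (v <= C)%MS, v != 0 & wt v == m]].
  have exP : exists m, P m.
    by exists (wt (row i C)); apply/existsP; exists (row i C); rewrite row_sub hi eqxx.
  case: (ex_minnP exP) => d' /existsP [v /and3P [hv hv0 /eqP hw]] hmin.
  exists d'; last by rewrite -hw; apply: hdmin (submx_trans hv hCC') hv0.
  split; first by exists v.
  move=> w hw1 hw2; apply: hmin; apply/existsP; exists w; by rewrite hw1 hw2 eqxx.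
- split => //.
    by rewrite /edual; apply/sub_kermxP; have := congr1 trmx hCy; rewrite trmx_mul trmxK trmx0.
  exists 1%g; rewrite col_perm1; move/andP: hGC => [hGC hCG]; apply/andP; split.
    apply: submx_trans hdec _; rewrite -addsmxE; exact: addsmxS (submx_refl y) hCG.
  by rewrite -addsmxE addsmx_sub hyC (submx_trans hGC hCC').
Qed.
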